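(* Let $X,X_1,X_2,\dots$ be i.i.d. real random variables with $EX=0$ and $E|X|^{2+\varepsilon}<\infty$ for some $\varepsilon>0$. Let $\mu>0$, $m\ge1$, $\delta\in(0,1/2]$ and $\alpha$ satisfy $2<\alpha\le(2+\varepsilon)(1-\delta)$, and assume $$\frac{6\cdot 2^{\alpha}}{(\alpha-1)(m+1)^{\alpha-1}\mu}\,E\big[(X^+)^{2+\varepsilon}\big]\le1.$$ Let $n_k=2^{k-1}$ for $k\ge1$, $\bar G(t)=\int_t^\infty (1+s)^{-\alpha}\,ds$, and $$g(k)=\frac{\bar G(m+\mu n_{k-1})-\bar G(m+\mu n_k)}{\bar G(m+\mu n_1)},\qquad k\ge2,$$ and $A_k=\bigcup_{j=n_{k-1}}^{n_k-1}\{X_j>(\mu j+m)^{1-\delta}\}$. Then $$\frac{3P(A_k)}{g(k)}\le1\qquad\text{for all }k\ge2.$$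
   Context: $X^+=\max(X,0)$. $g$ is a probability mass function on $\{2,3,\dots\}$ (it is the law of the dyadic block containing a level associated with a Pareto random variable $Y$ with $P(Y>y)=(1+y)^{-\alpha}$, $y\ge0$). *)

(* Defs.v *)
From HB Require Import structures.
From mathcomp Require Import all_boot all_order all_algebra.
From mathcomp Require Import all_classical all_reals all_analysis.
Set Implicit Arguments. Unset Strict Implicit. Unset Printing Implicit Defensive.
Import Order.TTheory GRing.Theory Num.Theory.
Local Open Scope classical_set_scope.
Local Open Scope ring_scope.

Definition mutually_independent_RVs (R : realType) (d : measure_display)
  (T : measurableType d) (P : probability T R) (X : nat -> {RV P >-> R}) : Prop :=
  forall (I : seq nat) (B : nat -> set R), uniq I ->
    (forall i, measurable (B i)) ->
    P (\bigcap_(i in [set` I]) (X i @^-1` B i)) =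
    (\prod_(i <- I) P (X i @^-1` B i))%E.

Definition identically_distributed (R : realType) (d : measure_display)
  (T : measurableType d) (P : probability T R) (X : nat -> {RV P >-> R}) : Prop :=
  forall i (B : set R), measurable B -> P (X i @^-1` B) = P (X 0%N @^-1` B).

Definition iid_seq (R : realType) (d : measure_display)
  (T : measurableType d) (P : probability T R) (X : nat -> {RV P >-> R}) : Prop :=
  identically_distributed X /\ mutually_independent_RVs X.

Definition nk (k : nat) : nat := (2 ^ k.-1)%N.

Definition Gbar (R : realType) (alpha t : R) : R :=
  fine (\int[lebesgue_measure]_(s in `[t, +oo[%classic) ((1 + s) `^ (- alpha))%:E)%E.

Definition gk (R : realType) (alpha mu m : R) (k : nat) : R :=
  (Gbar alpha (m + mu * (nk k.-1)%:R) - Gbar alpha (m + mu * (nk k)%:R))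
   / Gbar alpha (m + mu * (nk 1)%:R).

Definition Ak (R : realType) (d : measure_display) (T : measurableType d)
  (P : probability T R) (X : nat -> {RV P >-> R}) (mu m delta : R) (k : nat)
  : set T :=
  \bigcup_(j in [set j : nat | (nk k.-1 <= j < nk k)%N])
     [set w | (mu * j%:R + m) `^ (1 - delta) < X j w].

Definition pospart (R : realType) (x : R) : R := Num.max x 0.

(* Main.v *)
Require Import Defs.
From HB Require Import structures.
From mathcomp Require Import all_boot all_order all_algebra.
From mathcomp Require Import all_classical all_reals all_analysis.
From mathcomp.algebra_tactics Require Import ring lra.
Import Order.TTheory GRing.Theory Num.Theory.
Local Open Scope classical_set_scope.
Local Open Scope ring_scope.

Section G.
Variable R : realType.
Lemma ln_cvgy (b : R) : 0 < b -> b * ln (1 + x) @[x --> +oo] --> +oo.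
Proof.
move=> b0; apply/cvgryPge => A.
near=> x.
have x0 : 0 < x by near: x; exact: nbhs_pinfty_gt; rewrite num_real.
have xA : expR (A / b) <= x by near: x; exact: nbhs_pinfty_ge; rewrite num_real.
rewrite -ler_pdivrMl // mulrC.
rewrite -(expRK (A / b)) ler_ln ?posrE ?expR_gt0 ?addr_gt0 //.
by rewrite (le_trans xA) // lerDr.
Unshelve. all: end_near. Qed.

Lemma pow1_cvg0 (b : R) : 0 < b -> (1 + x) `^ (- b) @[x --> +oo] --> 0.
Proof.
move=> b0.
apply: (@cvg_trans _ ((expR (- (b * ln (1 + x)))) @[x --> +oo])).
  apply: near_eq_cvg; near=> x.
  have x0 : 0 < 1 + x by apply: addr_gt0 => //; near: x; exact: nbhs_pinfty_gt; rewrite num_real.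
  by rewrite /powR gt_eqF // mulNr.
have H := (cvg_comp _ _ (@ln_cvgy b b0) (@cvgr_expR R)). exact: H.
Unshelve. all: end_near. Qed.
Lemma is_derive_pow1 (b x : R) : -1 < x ->
  is_derive x 1 (fun y => (1 + y) `^ b) (b * (1 + x) `^ (b - 1)).
Proof.
move=> x1.
have x0 : 0 < 1 + x by rewrite -ltrBlDl sub0r.
have -> : (fun y => (1 + y) `^ b) = (@powR R ^~ b) \o (fun y => 1 + y) by [].
have d1 : derivable (fun y : R => 1 + y) x 1 by [].
have d2 : derivable (@powR R ^~ b) (1 + x) 1.
  by apply: derivable_powR; rewrite in_itv /= andbT.
split.
  apply/derivable1_diffP; apply: differentiable_comp; exact/derivable1_diffP.
rewrite -derive1E derive1_comp // powR_derive1 ?in_itv /= ?andbT //.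
rewrite derive1E derive_val.
by rewrite add0r !mulr1.
Qed.

Lemma Gbar_eq (al t : R) : 1 < al -> 0 <= t ->
  Gbar al t = (1 + t) `^ (1 - al) / (al - 1).
Proof.
move=> al1 t0.
have a10 : 0 < al - 1 by rewrite subr_gt0.
pose r := - (al - 1)^-1.
pose F := fun s : R => (1 + s) `^ (1 - al) * r.
have dp x : t <= x -> is_derive x 1 (fun y => (1 + y) `^ (- al)) (- al * (1 + x) `^ (- al - 1)).
  by move=> tx; apply: is_derive_pow1; apply: (lt_le_trans _ (le_trans t0 tx)); rewrite ltrN10.
have dq x : t <= x -> is_derive x 1 (fun y => (1 + y) `^ (1 - al)) ((1 - al) * (1 + x) `^ (1 - al - 1)).
  by move=> tx; apply: is_derive_pow1; apply: (lt_le_trans _ (le_trans t0 tx)); rewrite ltrN10.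
rewrite /Gbar (@ge0_continuous_FTC2y _ (fun s => (1 + s) `^ (- al)) F t 0).
- by rewrite /= sub0r /F mulrN opprK.
- by move=> x _; exact: powR_ge0.
- apply: derivable_within_continuous => x; rewrite in_itv /= andbT => tx.
  by have [] := dp x tx.
- rewrite -(mul0r r); apply: (@cvgMr_tmp _ _ _ _ (fun x => (1 + x) `^ (1 - al))).
  have := @pow1_cvg0 (al - 1) a10; by rewrite opprB.
- move=> x tx; have [dd _] := dq x (ltW tx).
  exact: (derivableM dd (derivable_cst r x 1)).
- have [dd _] := dq t (lexx t).
  have hd := iffLR (derivable1_diffP _ _) (derivableM dd (derivable_cst r t 1)).
  exact: (cvg_at_right_filter (differentiable_continuous hd)).
- move=> x; rewrite in_itv /= andbT => tx.
  have [dd dv] := dq x (ltW tx).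
  rewrite /F (@derive1Mr _ (fun y => (1 + y) `^ (1 - al))) // derive1E dv.
  have -> : 1 - al - 1 = - al by rewrite addrAC subrr add0r.
  rewrite /r -opprB mulNr mulrN mulNr opprK mulrAC mulfV ?mul1r //.
  exact: lt0r_neq0.
Qed.
Lemma pow_diff (x y al : R) : 0 < x -> x <= y -> 1 < al ->
  (y - x) * y `^ (- al) <= (x `^ (1 - al) - y `^ (1 - al)) / (al - 1).
Proof.
move=> x0 xy al1.
have y0 : 0 < y by apply: lt_le_trans xy.
have b0 : 0 < al - 1 by rewrite subr_gt0.
have lnxy : 1 - x / y <= ln y - ln x.
  have h : -1 < x / y - 1 by rewrite ltrBrDr addrC subrr divr_gt0.
  have := le_ln1Dx h.
  rewrite addrC subrK ln_div ?posrE //.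
  lra.
pose u := (1 - al) * ln x; pose v := (1 - al) * ln y.
have ex : x `^ (1 - al) = expR u by rewrite /powR gt_eqF.
have ey : y `^ (1 - al) = expR v by rewrite /powR gt_eqF.
have ey2 : y `^ (- al) = expR v / y.
  have -> : - al = (1 - al) - 1 by ring.
  rewrite powRB ?powRr1 ?ey ?ltW //.
  by apply/implyP => _; rewrite gt_eqF.
have euv : expR u = expR v * expR (u - v) by rewrite -expRD addrC subrK.
have h1 : (al - 1) * ((y - x) / y) <= u - v.
  have -> : (y - x) / y = 1 - x / y by rewrite mulrBl divff ?gt_eqF.
  rewrite /u /v.
  nra.
have h2 := expR_ge1Dx (u - v).
have Y0 : 0 < expR v := expR_gt0 v.
rewrite ler_pdivlMr // ex ey ey2 euv.
have -> : (y - x) * (expR v / y) = expR v * ((y - x) / y) by rewrite mulrA mulrAC [_ * expR v]mulrC.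
nra.
Qed.
End G.

Section M.
Context (R : realType) (d : measure_display) (T : measurableType d) (P : probability T R).

Lemma mpos (Y : {RV P >-> R}) p :
  measurable_fun setT (fun w => pospart (Y w) `^ p).
Proof.
apply: (measurableT_comp (measurable_realfun.measurable_powR p)).
apply: (measurable_realfun.measurable_maxr (f := Y) (g := cst 0)) => //.
Qed.

Lemma markov_pos (Y : {RV P >-> R}) (c p : R) : 0 < c -> 0 < p ->
 ((c `^ p)%:E * P [set w | (c < Y w)%R] <= 'E_P[(fun w => pospart (Y w) `^ p)%R])%E.
Proof.
move=> c0 p0.
have mY : measurable_fun setT Y by [].
have mS : measurable [set w | (c < Y w)%R].
  have -> : [set w | (c < Y w)%R] = Y @^-1` `]c, +oo[.
    by apply/seteqP; split => w /=; rewrite in_itv /= andbT.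
  by rewrite -(setTI (Y @^-1` _)); apply: mY => //; exact: measurable_itv.
rewrite unlock -integral_cst //.
apply: (@le_trans _ _ (\int[P]_(w in [set w | (c < Y w)%R]) ((pospart (Y w) `^ p)%R)%:E)%E).
  apply: ge0_le_integral => //.
  - by move=> w _; rewrite lee_fin powR_ge0.
  - by apply/measurable_realfun.measurable_EFinP; apply: measurable_funS (mpos Y p).
  - move=> w /= cw; rewrite lee_fin /pospart.
    have -> : Num.max (Y w) 0 = Y w by apply/max_idPl; rewrite ltW // (lt_trans c0 cw).
    by apply: ge0_ler_powR; rewrite ?ltW // nnegrE ltW // (lt_trans c0 cw).
apply: ge0_subset_integral => //.
- by apply/measurable_realfun.measurable_EFinP; exact: mpos.
- by move=> w _; rewrite lee_fin powR_ge0.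
Qed.

Lemma nkS k : (2 <= k)%N -> nk k = (2 * nk k.-1)%N.
Proof. by case: k => [|[|k]] //= _; rewrite /nk /= expnS. Qed.

Lemma probAk (X : nat -> {RV P >-> R}) (eps mu m delta alpha E : R) (k : nat) :
  identically_distributed X -> 0 < eps -> 0 < mu -> 1 <= m ->
  0 < alpha -> alpha <= (2 + eps) * (1 - delta) ->
  ('E_P[(fun w => pospart (X 0%N w) `^ (2 + eps))%R] = E%:E)%E ->
  (2 <= k)%N ->
  (P (Ak X mu m delta k) <=
    ((nk k.-1)%:R * (E / (mu * (nk k.-1)%:R + m) `^ alpha))%:E)%E.
Proof.
move=> hid e0 mu0 m1 a0 ale hE k2.
set n0 := nk k.-1.
have hk := @nkS k k2.
pose c (j : nat) := (mu * j%:R + m) `^ (1 - delta).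
have base1 (j : nat) : 1 <= mu * j%:R + m.
  by apply: (le_trans m1); rewrite lerDr mulr_ge0 // ltW.
have base0 (j : nat) : 0 < mu * j%:R + m by apply: lt_le_trans (base1 j).
have c0 j : 0 < c j by apply: powR_gt0.
pose F (i : nat) := [set w | (c (n0 + i)%N < X (n0 + i)%N w)%R].
have FE i : F i = X (n0 + i)%N @^-1` `]c (n0 + i)%N, +oo[.
  by apply/seteqP; split => w /=; rewrite in_itv /= andbT.
have mF i : measurable (F i).
  rewrite FE; apply: measurable_funPTI.
  exact: measurable_itv.
have AkE : Ak X mu m delta k = \big[setU/set0]_(i < n0) F i.
  rewrite -bigcup_mkord; apply/seteqP; split => w /=.
  - move=> [j /= /andP[j1 j2] hj]; exists (j - n0)%N => /=.
      by rewrite ltn_subLR // addnn -mul2n -hk.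
    by rewrite /F /= subnKC.
  - move=> [i /= i1 hi]; exists (n0 + i)%N => //=.
    by rewrite leq_addr /= hk mul2n -addnn ltn_add2l.
rewrite AkE; apply: le_trans (Boole_inequality _ (fun i _ => mF i)) _.
apply: (@le_trans _ _ (\sum_(i < n0) (E / (mu * n0%:R + m) `^ alpha)%:E)%E); last first.
  by rewrite sumEFin sumr_const card_ord mulr_natl.
apply: lee_sum => i _.
set j := (n0 + i)%N.
have p0 : 0 < 2 + eps by rewrite addr_gt0.
have hM := @markov_pos (X 0%N) (c j) (2 + eps) (c0 j) p0.
rewrite hE in hM.
apply: (@le_trans _ _ (P [set w | (c j < X 0%N w)%R])).
  rewrite le_eqVlt; apply/orP; left; apply/eqP.
  have := hid j `]c j, +oo[%classic (measurable_itv _).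
  rewrite -/j -FE => hh; transitivity (P (F i)) => //; rewrite hh.
  by congr (P _); apply/seteqP; split => w /=; rewrite in_itv /= andbT.
have cp0 : 0 < c j `^ (2 + eps) by apply: powR_gt0.
have E0 : 0 <= E.
  have : (0 <= E%:E)%E by rewrite -hE unlock; apply: integral_ge0 => w _; rewrite lee_fin powR_ge0.
  by rewrite lee_fin.
apply: (@le_trans _ _ ((c j `^ (2 + eps))^-1%:E * E%:E)%E).
  by rewrite lee_pdivlMl.
rewrite -EFinM lee_fin mulrC ler_wpM2l //.
have h1 : (mu * n0%:R + m) `^ alpha <= c j `^ (2 + eps).
  apply: (@le_trans _ _ ((mu * j%:R + m) `^ alpha)).
    apply: ge0_ler_powR; first exact: ltW.
    - by rewrite nnegrE ltW.
    - by rewrite nnegrE ltW.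
    by rewrite lerD2r ler_pM2l // ler_nat leq_addr.
  rewrite /c -powRrM; apply: ler_powR => //.
  by rewrite mulrC.
rewrite lef_pV2 // ?posrE // powR_gt0 //.
Qed.
End M.

Lemma fine_le_fin (R : realType) (x : \bar R) (y : R) :
  (0 <= x)%E -> (x <= y%:E)%E -> fine x <= y.
Proof. by case: x => [r| |] //= _; rewrite lee_fin. Qed.

Theorem lemma1 (R : realType) (d : measure_display) (T : measurableType d)
  (P : probability T R) (X : nat -> {RV P >-> R}) (eps mu m delta alpha : R) :
  iid_seq X ->
  0 < eps ->
  ('E_P[X 0%N] = 0)%E ->
  ('E_P[(fun w => `|X 0%N w| `^ (2 + eps))%R] < +oo)%E ->
  0 < mu -> 1 <= m -> 0 < delta -> delta <= 2^-1 ->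
  2 < alpha -> alpha <= (2 + eps) * (1 - delta) ->
  ((6 * 2 `^ alpha / ((alpha - 1) * (m + 1) `^ (alpha - 1) * mu))%:E
     * 'E_P[(fun w => pospart (X 0%N w) `^ (2 + eps))%R] <= 1)%E ->
  forall k : nat, (2 <= k)%N ->
    3 * fine (P (Ak X mu m delta k)) / gk alpha mu m k <= 1.
Proof.
move=> [hid _] e0 _ _ mu0 m1 d0 dh a2 ale hK k k2.
have a1 : 1 < alpha by apply: lt_trans a2; rewrite ltr1n.
have a0 : 0 < alpha by apply: lt_trans a1.
have b0 : 0 < alpha - 1 by rewrite subr_gt0.
have Ege0 : (0 <= 'E_P[(fun w => pospart (X 0%N w) `^ (2 + eps))%R])%E.
  by rewrite unlock; apply: integral_ge0 => w _; rewrite lee_fin powR_ge0.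
set M := (m + 1) `^ (alpha - 1).
have m0 : 0 < m by apply: lt_le_trans m1.
have M0 : 0 < M by apply: powR_gt0; rewrite addr_gt0.
set T2 := 2 `^ alpha.
have T20 : 0 < T2 by apply: powR_gt0.
have D0 : 0 < (alpha - 1) * M * mu by rewrite !mulr_gt0.
have C0 : 0 < 6 * T2 / ((alpha - 1) * M * mu) by rewrite divr_gt0 // mulr_gt0.
move: Ege0 hK.
case hE : ('E_P[(fun w => pospart (X 0%N w) `^ (2 + eps))%R])%E => [E| |] // E0 hK; last first.
  by move: hK; rewrite gt0_muley ?lte_fin // leye_eq.
rewrite lee_fin in E0.
rewrite -EFinM lee_fin mulrAC ler_pdivrMr // mul1r -/M -/T2 in hK.
set n0 := nk k.-1.
have n01 : (1 <= n0)%N by rewrite /n0 /nk expn_gt0.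
have n0r : 0 < n0%:R :> R by rewrite ltr0n.
have hP := @probAk R d T P X eps mu m delta alpha E k hid e0 mu0 m1 a0 ale hE k2.
rewrite -/n0 in hP.
have hPf := @fine_le_fin R _ _ (measure_ge0 P _) hP.
set A := (mu * n0%:R + m) `^ alpha.
have base0 : 0 < mu * n0%:R + m by nra.
have A0 : 0 < A by apply: powR_gt0.
have nkk : (nk k)%:R = 2 * n0%:R :> R by rewrite (@nkS k k2) natrM.
have nk1 : (nk 1)%:R = 1 :> R by [].
set a := m + mu * n0%:R.
set b := m + mu * (2 * n0%:R).
have a0' : 0 <= a by rewrite /a; nra.
have b0' : 0 <= b by rewrite /b; nra.
have c0' : 0 <= m + mu * 1 by nra.
have ab : 1 + a <= 1 + b by rewrite /a /b; nra.
have hnum := @pow_diff R (1 + a) (1 + b) alpha (ltr_pwDl ltr01 a0') ab a1.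
have e1 : (1 + b) - (1 + a) = mu * n0%:R by rewrite /a /b; ring.
rewrite e1 in hnum.
set B := (1 + b) `^ alpha.
have B0 : 0 < B by apply: powR_gt0; rewrite ltr_pwDl.
set Cc := (1 + (m + mu * 1)) `^ (alpha - 1).
have Cc0 : 0 < Cc by apply: powR_gt0; rewrite ltr_pwDl.
have hB : (1 + b) `^ (- alpha) = B^-1 by rewrite powRN.
have hC : (1 + (m + mu * 1)) `^ (1 - alpha) = Cc^-1 by rewrite -opprB powRN.
rewrite hB in hnum.
have gE : gk alpha mu m k =
   (((1 + a) `^ (1 - alpha) - (1 + b) `^ (1 - alpha)) / (alpha - 1)) * ((alpha - 1) * Cc).
  rewrite /gk nkk nk1 !Gbar_eq // -/a -/b hC.
  by field; rewrite !gt_eqF.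
have ggt : mu * n0%:R * B^-1 * ((alpha - 1) * Cc) <= gk alpha mu m k.
  by rewrite gE ler_pM2r ?mulr_gt0.
have g0 : 0 < gk alpha mu m k.
  apply: lt_le_trans ggt; rewrite !mulr_gt0 ?invr_gt0 //.
rewrite ler_pdivrMr // mul1r; apply: le_trans ggt.
have hM : M <= Cc.
  apply: ge0_ler_powR; first exact: ltW.
  - by rewrite nnegrE ltW // addr_gt0.
  - by rewrite nnegrE ltW // ltr_pwDl // ltr_pwDl // mulr1.
  by lra.
have hBA : B <= T2 * A.
  rewrite /T2 /A -powRM //; last exact: ltW.
  apply: ge0_ler_powR; first exact: ltW.
  - by rewrite nnegrE ltW // ltr_pwDl.
  - by rewrite nnegrE mulr_ge0 // ltW.
  rewrite /b; move: m1 n0r mu0; nra.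
apply: (@le_trans _ _ (3 * (n0%:R * (E / A)))).
  by rewrite ler_pM2l //.
have h1 : E * B <= E * (T2 * A) by rewrite ler_wpM2l.
set N := n0%:R.
have Q0 : 0 <= N * A by rewrite mulr_ge0 // ltW.
have s1 : 3 * N * E * B <= 3 * N * (E * (T2 * A)).
  by rewrite -!mulrA ler_wpM2l // ?ler_wpM2l // ltW.
have s3 : (N * A / 2) * (6 * T2 * E) <= (N * A / 2) * ((alpha - 1) * M * mu).
  by rewrite ler_wpM2l // divr_ge0.
have s4 : (alpha - 1) * M * mu <= (alpha - 1) * Cc * mu.
  by rewrite ler_pM2r // ler_pM2l.
have s5 : (N * A / 2) * ((alpha - 1) * Cc * mu) <= N * A * ((alpha - 1) * Cc * mu).
  apply: ler_wpM2r; last lra.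
  by apply: mulr_ge0; [apply: mulr_ge0|]; apply: ltW.
have key : 3 * N * E * B <= mu * N * (alpha - 1) * Cc * A.
  have e2 : 3 * N * (E * (T2 * A)) = (N * A / 2) * (6 * T2 * E) by field.
  have e3 : mu * N * (alpha - 1) * Cc * A = N * A * ((alpha - 1) * Cc * mu) by ring.
  rewrite e3; apply: (le_trans s1); rewrite e2; apply: (le_trans s3).
  apply: le_trans s5; rewrite ler_wpM2l // divr_ge0 //.
have AB0 : 0 < A * B by rewrite mulr_gt0.
have -> : 3 * (N * (E / A)) = (3 * N * E * B) / (A * B) by field; rewrite !gt_eqF.
have -> : mu * N / B * ((alpha - 1) * Cc) = (mu * N * (alpha - 1) * Cc * A) / (A * B)
  by field; rewrite !gt_eqF.
by rewrite ler_pM2r // invr_gt0.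
Qed.
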